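(* Let $f:B\to C$ and $g:C\to D$ be fibrations between objects of $\mathcal G$. Then $g\circ f:B\to D$ is a fibration, i.e. $\ker(g\circ f)$ is a strict subobject of $B$.
   Context: Let $\Lambda$ be a finite dimensional algebra over a field and $\mathrm{mod}\text-\Lambda$ the category of finitely generated right $\Lambda$-modules. Fix a torsion class $\mathcal G\subseteq\mathrm{mod}\text-\Lambda$, i.e. a class of modules closed under isomorphisms, extensions and quotients. For $B\in\mathcal G$, a subobject of $B$ is a submodule of $B$ that lies in $\mathcal G$. A subobject $A\subseteq B$ is a strict subobject if $A\cap B'\in\mathcal G$ for every subobject $B'$ of $B$. A strict quotient of $B$ is a quotient $B/A$ with $A$ a strict subobject of $B$; an epimorphism $B\to C$ between objects of $\mathcal G$ is called a fibration if its kernel is a strict subobject of $B$ (i.e. it is the quotient map onto a strict quotient). *)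

(* Defs.v *)
(* Right Lambda-modules are modeled as left modules over the
   converse ring Lambda^c (lmodType (Lambda^c)). *)
From HB Require Import structures.
From mathcomp Require Import all_boot all_order all_algebra.
From mathcomp Require Import falgebra.
Set Implicit Arguments. Unset Strict Implicit. Unset Printing Implicit Defensive.
Import GRing.Theory.
Local Open Scope ring_scope.

Definition surj (X Y : Type) (f : X -> Y) : Prop := forall y, exists x, f x = y.

Section Defs.
Variables (K : fieldType) (L : falgType K).

Definition is_hom (M N : lmodType L^c) (f : M -> N) : Prop :=
  forall (a : L^c) (u v : M), f (a *: u + v) = a *: f u + f v.

Definition fin_gen (M : lmodType L^c) : Prop :=
  exists s : seq M, forall x : M,
    exists c : 'I_(size s) -> L^c, x = \sum_(i < size s) c i *: s`_i.

Definition submodule (M : lmodType L^c) (A : M -> Prop) : Prop :=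
  A 0 /\ forall (a : L^c) (u v : M), A u -> A v -> A (a *: u + v).

Definition torsion_class (G : lmodType L^c -> Prop) : Prop :=
  [/\ (forall M, G M -> fin_gen M),
      (forall (M N : lmodType L^c) (f : M -> N),
          is_hom f -> bijective f -> G M -> G N),
      (forall (A B C : lmodType L^c) (i : A -> B) (p : B -> C),
          is_hom i -> is_hom p -> injective i -> surj p ->
          (forall b, p b = 0 <-> exists a, b = i a) ->
          G A -> G C -> G B) &
      (forall (B C : lmodType L^c) (p : B -> C),
          is_hom p -> surj p -> G B -> G C)].

Definition sub_in (G : lmodType L^c -> Prop) (B : lmodType L^c) (A : B -> Prop)
  : Prop :=
  exists (M : lmodType L^c) (i : M -> B),
    [/\ G M, is_hom i, injective i & forall b, A b <-> exists m, b = i m].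

Definition subobject (G : lmodType L^c -> Prop) (B : lmodType L^c) (A : B -> Prop)
  : Prop := submodule A /\ sub_in G A.

Definition strict_subobject (G : lmodType L^c -> Prop) (B : lmodType L^c)
  (A : B -> Prop) : Prop :=
  subobject G A /\
  forall B' : B -> Prop, subobject G B' -> sub_in G (fun b => A b /\ B' b).

Definition fibration (G : lmodType L^c -> Prop) (B C : lmodType L^c) (f : B -> C)
  : Prop :=
  [/\ is_hom f, surj f & strict_subobject G (fun b => f b = 0)].
End Defs.

(* Main.v *)
Require Import Defs.
From HB Require Import structures.
From mathcomp Require Import all_boot all_order all_algebra.
From mathcomp Require Import falgebra.
From Stdlib Require Import ClassicalEpsilon.
Set Implicit Arguments. Unset Strict Implicit. Unset Printing Implicit Defensive.
Import GRing.Theory.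
Local Open Scope ring_scope.

Definition asb (P : Prop) : bool := if excluded_middle_informative P then true else false.
Lemma asbP (P : Prop) : reflect P (asb P).
Proof. rewrite /asb; case: excluded_middle_informative => h; by constructor. Qed.

Section Sub.
Variables (K : fieldType) (L : falgType K) (M : lmodType L^c) (P : M -> Prop).
Hypothesis HP : submodule P.
Definition pb : pred M := fun x => asb (P x).
Definition ST of submodule P := {x : M | pb x}.
HB.instance Definition _ := [isSub of ST HP for (@sval M pb)].
HB.instance Definition _ := [Choice of ST HP by <:].

Lemma pb_closed : subsemimod_closed pb.
Proof.
apply: GRing.submod_closed_semi; split.
  by apply/asbP; case: HP.
move=> a u v /asbP Pu /asbP Pv; apply/asbP; by case: HP => _ h; apply: h.
Qed.
HB.instance Definition _ := GRing.SubChoice_isSubLmodule.Build _ _ _ (ST HP) pb_closed.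
Definition STv : ST HP -> M := val.
Lemma STv_hom : is_hom STv.
Proof. by move=> a u v. Qed.
End Sub.

Section Main.
Variables (K : fieldType) (L : falgType K) (G : lmodType L^c -> Prop).
Hypothesis HG : torsion_class G.

Lemma hom0 (M N : lmodType L^c) (f : M -> N) : is_hom f -> f 0 = 0.
Proof.
move=> hf; have := hf 1 0 0; rewrite scale1r !addr0 => /(congr1 (fun x => x - f 0)).
by rewrite subrr addrK scale1r => ->.
Qed.

Lemma ST_sub_in (M : lmodType L^c) (P : M -> Prop) (HP : submodule P) :
  G (ST HP) -> sub_in G P.
Proof.
move=> GS; exists (ST HP), (@STv _ _ _ _ HP); split => //.
- exact: val_inj.
- move=> b; split.
    by move=> Pb; exists (Sub b (introT (asbP _) Pb)).
  by case=> [[x Px]] ->; apply/asbP.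
Qed.

Lemma sub_in_ext (M : lmodType L^c) (A A' : M -> Prop) :
  (forall b, A b <-> A' b) -> sub_in G A -> sub_in G A'.
Proof.
move=> e [N [i [GN hi ii im]]]; exists N, i; split => // b.
by rewrite -e.
Qed.

Lemma ext_sub (B C : lmodType L^c) (P : B -> Prop) (HP : submodule P)
  (h : B -> C) (hh : is_hom h) (Q : C -> Prop) :
  sub_in G (fun b => P b /\ h b = 0) -> sub_in G Q ->
  (forall b, P b -> Q (h b)) -> (forall c, Q c -> exists b, P b /\ h b = c) ->
  sub_in G P.
Proof.
case: HG => _ _ Hext _.
move=> [MK [iK [GK hK injK imK]]] [MQ [iQ [GQ hQ injQ imQ]]] PQ QP.
apply: (@ST_sub_in _ _ HP).
have ex : forall s : ST HP, exists m, h (val s) = iQ m.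
  by case=> [x /= /asbP Px]; apply/imQ/PQ.
pose p (s : ST HP) := proj1_sig (constructive_indefinite_description _ (ex s)).
have pE : forall s, iQ (p s) = h (val s).
  by move=> s; rewrite /p; case: constructive_indefinite_description.
have iKP : forall m, pb P (iK m).
  by move=> m; apply/asbP; have /imK [] : exists m', iK m = iK m' by exists m.
pose i (m : MK) : ST HP := Sub (iK m) (iKP m).
apply: (Hext MK (ST HP) MQ i p).
- move=> a u v; apply: val_inj; rewrite /= hK.
  by [].
- move=> a u v; apply: injQ; rewrite pE hQ !pE.
  by rewrite [val (a *: u + v)]/= hh.
- by move=> x y /(congr1 val) /= /injK.
- move=> m; have [b [Pb hb]] := QP _ (proj2 (imQ _) (ex_intro _ m erefl)).
  exists (Sub b (introT (asbP _) Pb)); apply: injQ; by rewrite pE /= hb.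
- move=> s; split.
    move=> ps0; have : h (val s) = 0 by rewrite -pE ps0 (hom0 hQ).
    case: s ps0 => x Px0 _ hx; have Px : P x by apply/asbP.
    have [m em] := proj1 (imK x) (conj Px hx).
    by exists m; apply: val_inj.
  case=> m ->; apply: injQ; rewrite pE (hom0 hQ) /=.
  by have [] := proj2 (imK (iK m)) (ex_intro _ m erefl).
- exact: GK.
- exact: GQ.
Qed.


Lemma img_sub_in (B C : lmodType L^c) (f : B -> C) (hf : is_hom f)
  (B' : B -> Prop) : subobject G B' ->
  subobject G (fun c => exists b, B' b /\ f b = c).
Proof.
case: HG => _ _ _ Hq.
move=> [[B0 Bcl] [MB [iB [GB hB injB imB]]]].
have HP : submodule (fun c => exists b, B' b /\ f b = c).
  split; first by exists 0; rewrite (hom0 hf).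
  move=> a _ _ [u [Bu <-]] [v [Bv <-]]; exists (a *: u + v); split; last exact: hf.
  exact: Bcl.
split => //; apply: (ST_sub_in (HP := HP)).
have iBP : forall m, pb (fun c => exists b, B' b /\ f b = c) (f (iB m)).
  move=> m; apply/asbP; exists (iB m); split => //.
  by apply/imB; exists m.
pose q (m : MB) : ST HP := Sub (f (iB m)) (iBP m).
apply: (Hq MB _ q) => //.
- move=> a u v; apply: val_inj; by rewrite /= hB hf.
- case=> c Pc; have /asbP [b [Bb fb]] := Pc.
  have [m em] := proj1 (imB b) Bb.
  by exists m; apply: val_inj; rewrite /= -em.
Qed.

Lemma subI (B : lmodType L^c) (A A' : B -> Prop) :
  submodule A -> submodule A' -> submodule (fun b => A b /\ A' b).
Proof.
move=> [A0 Acl] [A'0 A'cl]; split => // a u v [? ?] [? ?]; split; auto.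
Qed.

Lemma ker_sub (B C : lmodType L^c) (f : B -> C) :
  is_hom f -> submodule (fun b => f b = 0).
Proof.
move=> hf; split; first exact: hom0.
by move=> a u v fu fv; rewrite hf fu fv scaler0 addr0.
Qed.

End Main.

Theorem mainTheorem3 (K : fieldType) (L : falgType K)
  (G : lmodType L^c -> Prop) (HG : torsion_class G)
  (B C D : lmodType L^c) (f : B -> C) (g : C -> D) :
  G B -> G C -> G D -> fibration G f -> fibration G g ->
  fibration G (g \o f).
Proof.
move=> _ _ _ [hf sf [[Kf Sf] strf]] [hg sg [[Kg Sg] strg]].
have hgf : is_hom (g \o f) by move=> a u v /=; rewrite hf hg.
have Kgf := ker_sub hgf.
split => //.
  by move=> d; have [c <-] := sg d; have [b <-] := sf c; exists b.
split.
  split => //.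
  apply: (ext_sub HG Kgf hf (Q := fun c => g c = 0)) => //.
  - by apply: sub_in_ext Sf => b; split => [fb|[]//]; split => //=; rewrite fb (hom0 hg).
  - by move=> c gc; have [b fb] := sf c; exists b; split => //=; rewrite fb.
move=> B' SB'.
have HP := subI Kgf (proj1 SB').
apply: (ext_sub HG HP hf (Q := fun c => g c = 0 /\ exists b, B' b /\ f b = c)).
- apply: sub_in_ext (strf _ SB') => b; split.
    by case=> fb Bb; split => //; split => //=; rewrite fb (hom0 hg).
  by case=> [[_ ?] ?].
- exact: strg _ (img_sub_in HG hf SB').
- by move=> b [gb Bb]; split => //; exists b.
- by move=> c [gc [b [Bb fb]]]; exists b; split => //; split => //=; rewrite fb.
Qed.
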